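(* Let $\Lambda_2,\Lambda_3,\Lambda_4\in\mathbb C$ with $\Lambda_4\ne0$, and let $\mathcal V^{[2]}$ be the Virasoro Whittaker module (any central charge) generated by $|J\rangle$ with $L_n|J\rangle=\Lambda_n|J\rangle$ for $n=2,3,4$ and $L_n|J\rangle=0$ for $n>4$. Consider formal power series $|\Psi\rangle=\sum_{k\ge0}\Lambda_5^k|\Psi_k\rangle$ with $|\Psi_0\rangle=|J\rangle$ and $|\Psi_k\rangle\in\mathcal V^{[2]}$ independent of the formal variable $\Lambda_5$, satisfying $L_n|\Psi\rangle=\Lambda_n|\Psi\rangle$ for $n=3,4,5$ and $L_n|\Psi\rangle=0$ for $n>5$. Then: (1) such a vector $|\Psi\rangle$ exists; (2) one can take $|\Psi_k\rangle\in U_{3k}$ for every $k\in\mathbb N$ (in fact this holds for the solution below); (3) $|\Psi\rangle$ is unique under the orthogonal gauge condition $\xi(|\Psi_k\rangle)=\delta_{k,0}$ for all $k\ge0$, and this unique solution satisfies $|\Psi_k\rangle\in U_{3k}$.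
   Context: Basis of $\mathcal V^{[2]}$: $v_\lambda=\mathbf L_{-\lambda}|J\rangle$, $\mathbf L_{-\lambda}=L_{-\lambda_1+2}\cdots L_{-\lambda_\ell+2}$, for partitions $\lambda=(\lambda_1\ge\dots\ge\lambda_\ell\ge1)$, with $v_\emptyset=|J\rangle$. Degree: $\deg v_\lambda=|\lambda|=\sum_i\lambda_i$; $U_m=\operatorname{span}\{v_\lambda:|\lambda|\le m\}$. The linear functional $\xi$ on $\mathcal V^{[2]}$ takes the coefficient of $v_\emptyset=|J\rangle$ in the expansion in the basis $\{v_\lambda\}$. The relations on $|\Psi\rangle$ hold order by order in $\Lambda_5$. *)

(* Defs.v *)
From HB Require Import structures.
From mathcomp Require Import all_boot all_order all_algebra.
From mathcomp Require Import complex.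
From mathcomp Require Import reals.
Set Implicit Arguments. Unset Strict Implicit. Unset Printing Implicit Defensive.
Import Order.TTheory GRing.Theory Num.Theory.
Local Open Scope ring_scope.

Section Defs.
Variables (C : fieldType) (V : lmodType C).

Definition is_partition (la : seq nat) : bool :=
  sorted (fun a b => (b <= a)%N) la && all (fun p => (0 < p)%N) la.

Definition vlam (L : int -> V -> V) (J : V) (la : seq nat) : V :=
  foldr (fun p v => L (2%:Z - p%:Z) v) J la.

Definition virasoro_rel (c : C) (L : int -> V -> V) : Prop :=
  forall (m n : int) (v : V),
    L m (L n v) - L n (L m v) =
      (m - n)%:~R *: L (m + n) v
      + (if m + n == 0 then c / 12%:R * (m ^+ 3 - m)%:~R else 0) *: v.

Definition pbw_basis (L : int -> V -> V) (J : V) : Prop :=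
  (forall v : V, exists s : seq (seq nat * C),
      all (fun p => is_partition p.1) s /\
      v = \sum_(p <- s) p.2 *: vlam L J p.1)
  /\
  (forall (s : seq (seq nat)) (a : seq nat -> C),
      uniq s -> all is_partition s ->
      \sum_(la <- s) a la *: vlam L J la = 0 ->
      forall la, la \in s -> a la = 0).

Definition in_span (L : int -> V -> V) (J : V) (P : pred (seq nat)) (v : V) : Prop :=
  exists s : seq (seq nat * C),
    all (fun p => is_partition p.1 && P p.1) s /\
    v = \sum_(p <- s) p.2 *: vlam L J p.1.

Definition in_U (L : int -> V -> V) (J : V) (m : nat) (v : V) : Prop :=
  in_span L J (fun la => (sumn la <= m)%N) v.

(* xi(v) = a : the coefficient of v_emptyset = |J> in v is a, i.e.
   v - a |J> lies in the span of the v_lambda with lambda nonempty *)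
Definition xi_is (L : int -> V -> V) (J : V) (v : V) (a : C) : Prop :=
  in_span L J (fun la => la != [::]) (v - a *: J).

(* |Psi> = sum_k Lambda_5^k Psi_k solves, order by order in Lambda_5,
   L_n Psi = Lambda_n Psi (n = 3,4,5), L_n Psi = 0 (n > 5), with Psi_0 = |J>. *)
Definition solves (L : int -> V -> V) (J : V) (La3 La4 : C) (Psi : nat -> V) : Prop :=
  Psi 0%N = J /\
  (forall k, L 3%:Z (Psi k) = La3 *: Psi k) /\
  (forall k, L 4%:Z (Psi k) = La4 *: Psi k) /\
  (forall k, L 5%:Z (Psi k) = if k is k'.+1 then Psi k' else 0) /\
  (forall (n : int) k, 5%:Z < n -> L n (Psi k) = 0).

End Defs.

(* Main.v *)
Require Import Defs.
From HB Require Import structures.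
From mathcomp Require Import all_boot all_order all_algebra.
From mathcomp Require Import complex.
From mathcomp Require Import reals.
From mathcomp Require Import zify ring.
From Stdlib Require Import Classical IndefiniteDescription.
Import Order.TTheory GRing.Theory Num.Theory.
Local Open Scope ring_scope.
Set Implicit Arguments. Unset Strict Implicit. Unset Printing Implicit Defensive.

Section Main.
Variables (R : realType) (V : lmodType R[i]) (c : R[i])
    (L : int -> {linear V -> V}) (J : V) (La2 La3 La4 : R[i]).
Hypothesis La4n0 : La4 != 0.
Hypothesis vir : virasoro_rel c (fun n => L n).
Hypothesis hJ2 : L 2%:Z J = La2 *: J.
Hypothesis hJ3 : L 3%:Z J = La3 *: J.
Hypothesis hJ4 : L 4%:Z J = La4 *: J.
Hypothesis hJn : forall n : int, 4%:Z < n -> L n J = 0.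
Hypothesis pbw : pbw_basis (fun n => L n) J.

Local Notation F := R[i].
Definition vl (la : seq nat) : V := vlam (fun n => L n) J la.
Definition Uz (z : int) (v : V) : Prop :=
  in_span (fun n => L n) J (fun la => (sumn la)%:Z <= z) v.
Definition Lam (n : int) : F :=
  if n == 2%:Z then La2 else if n == 3%:Z then La3 else if n == 4%:Z then La4 else 0.
Definition rho (n : int) (v : V) : V := L n v - Lam n *: v.
Definition X (p : nat) : V -> V := L (2%:Z - p%:Z).

Lemma vl_cons p la : vl (p :: la) = X p (vl la).
Proof. by []. Qed.
Lemma vl_nil : vl [::] = J.
Proof. by []. Qed.

Lemma Uz0 z : Uz z 0.
Proof. by exists [::]; rewrite big_nil. Qed.

Lemma UzD z u v : Uz z u -> Uz z v -> Uz z (u + v).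
Proof.
move=> [s [hs ->]] [t [ht ->]]; exists (s ++ t); split.
  by rewrite all_cat hs ht.
by rewrite big_cat.
Qed.

Lemma UzZ z a v : Uz z v -> Uz z (a *: v).
Proof.
move=> [s [hs ->]]; exists [seq (p.1, a * p.2) | p <- s]; split.
  by rewrite all_map; apply: sub_all hs => p.
by rewrite big_map scaler_sumr; apply: eq_bigr => p _ /=; rewrite scalerA.
Qed.

Lemma UzN z v : Uz z v -> Uz z (- v).
Proof. by move=> h; rewrite -scaleN1r; apply: UzZ. Qed.

Lemma UzB z u v : Uz z u -> Uz z v -> Uz z (u - v).
Proof. by move=> hu hv; apply: UzD => //; apply: UzN. Qed.

Lemma Uz_sum (I : Type) (s : seq I) (f : I -> V) z :
  (forall i, Uz z (f i)) -> Uz z (\sum_(i <- s) f i).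
Proof.
move=> h; elim: s => [|i s IH]; first by rewrite big_nil; apply: Uz0.
by rewrite big_cons; apply: UzD.
Qed.

Lemma Uz_sum_seq (I : eqType) (s : seq I) (f : I -> V) z :
  (forall i, i \in s -> Uz z (f i)) -> Uz z (\sum_(i <- s) f i).
Proof.
move=> h; rewrite big_seq; elim/big_rec: _ => [|i x hi hx]; first exact: Uz0.
by apply: UzD => //; apply: h.
Qed.

Lemma Uz_mono z z' v : z <= z' -> Uz z v -> Uz z' v.
Proof.
move=> hz [s [hs ->]]; exists s; split => //.
apply: sub_all hs => p /andP[-> h] /=; exact: le_trans h hz.
Qed.

Lemma Uz_neg z v : z < 0 -> Uz z v -> v = 0.
Proof.
move=> hz [[|p s] [hs ->]]; first by rewrite big_nil.
move: hs => /= /andP[/andP[_ h] _]; exfalso.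
have : (0 <= (sumn p.1)%:Z)%R by [].
lia.
Qed.

Lemma Uz_vl la : is_partition la -> Uz (sumn la)%:Z (vl la).
Proof.
move=> h; exists [:: (la, 1)]; split; first by rewrite /= h lexx.
by rewrite big_cons big_nil addr0 scale1r.
Qed.

Lemma Uz_ext (f : V -> V) (fD : forall u v, f (u + v) = f u + f v)
  (fZ : forall (a : F) v, f (a *: v) = a *: f v) (z w : int) :
  (forall la, is_partition la -> (sumn la)%:Z <= z -> Uz ((sumn la)%:Z + w) (f (vl la))) ->
  forall v, Uz z v -> Uz (z + w) (f v).
Proof.
move=> h v [s [hs ->]].
have f0 : f 0 = 0 by have := fZ 0 0; rewrite !scale0r.
elim: s hs => [|p s IH]; first by rewrite big_nil f0 => _; apply: Uz0.
move=> /= /andP[/andP[hp hz] hs]; rewrite big_cons fD fZ; apply: UzD; last exact: IH.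
apply: UzZ; apply: Uz_mono (h _ hp hz); lia.
Qed.

Lemma Uz_ext' (f : V -> V) (fD : forall u v, f (u + v) = f u + f v)
  (fZ : forall (a : F) v, f (a *: v) = a *: f v) (z t : int) :
  (forall la, is_partition la -> (sumn la)%:Z <= z -> Uz t (f (vl la))) ->
  forall v, Uz z v -> Uz t (f v).
Proof.
move=> h v [s [hs ->]].
have f0 : f 0 = 0 by have := fZ 0 0; rewrite !scale0r.
elim: s hs => [|p s IH]; first by rewrite big_nil f0 => _; apply: Uz0.
move=> /= /andP[/andP[hp hz] hs]; rewrite big_cons fD fZ; apply: UzD; last exact: IH.
by apply: UzZ; apply: h.
Qed.

Lemma XD p u v : X p (u + v) = X p u + X p v.
Proof. exact: linearD. Qed.
Lemma XZ p (a : F) v : X p (a *: v) = a *: X p v.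
Proof. exact: linearZ. Qed.
Lemma LD n u v : L n (u + v) = L n u + L n v.
Proof. exact: linearD. Qed.
Lemma LZ n (a : F) v : L n (a *: v) = a *: L n v.
Proof. exact: linearZ. Qed.

Definition cen (m n : int) : F :=
  if m + n == 0 then c / 12%:R * (m ^+ 3 - m)%:~R else 0.

Lemma comm m n v :
  L m (L n v) = L n (L m v) + ((m - n)%:~R *: L (m + n) v + cen m n *: v).
Proof. by rewrite -vir addrC subrK. Qed.

Lemma part_cons a la : is_partition (a :: la) -> is_partition la.
Proof.
rewrite /is_partition /= => /andP[hs /andP[_ ha]]; rewrite ha andbT.
exact: path_sorted hs.
Qed.

Lemma part_pos a la : is_partition (a :: la) -> (0 < a)%N.
Proof. by rewrite /is_partition /= => /andP[_ /andP[]]. Qed.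

Lemma part_cons2 p a la : (a <= p)%N -> (0 < p)%N -> is_partition (a :: la) ->
  is_partition (p :: a :: la).
Proof. by rewrite /is_partition /= => -> -> /andP[-> ->]. Qed.

Lemma part_one p : (0 < p)%N -> is_partition [:: p].
Proof. by rewrite /is_partition /= => ->. Qed.

Lemma X_part N : forall p mu, (0 < p)%N -> is_partition mu ->
  (sumn mu + p <= N)%N -> Uz N%:Z (X p (vl mu)).
Proof.
elim/ltn_ind: N => N IHN.
have IHv : forall p (z : int) v, (0 < p)%N -> z + p%:Z < N%:Z -> Uz z v ->
    Uz (z + p%:Z) (X p v).
  move=> p z v hp hz; apply: Uz_ext' => //; [exact: XD | exact: XZ |].
  move=> la hla hlaz.
  apply: (@Uz_mono (sumn la + p)%N%:Z); first lia.
  apply: IHN => //; lia.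
have main : forall p, (forall a, (p < a)%N -> forall nu, is_partition nu ->
      (sumn nu + a <= N)%N -> Uz N (X a (vl nu))) ->
    forall mu, (0 < p)%N -> is_partition mu -> (sumn mu + p <= N)%N ->
    Uz N (X p (vl mu)).
  move=> p IHa [|a mu'] hp hmu hN.
    rewrite -vl_cons; apply: (@Uz_mono (sumn [:: p])%:Z); first by rewrite /=; lia.
    by apply: Uz_vl; apply: part_one.
  have ha := part_pos hmu; have hmu' := part_cons hmu.
  case: (leqP a p) => hap.
    rewrite -vl_cons; apply: (@Uz_mono (sumn [:: p, a & mu'])%:Z).
      by move: hN => /=; lia.
    by apply: Uz_vl; apply: part_cons2.
  rewrite vl_cons /X comm; apply: UzD.
    apply: (@Uz_ext' (X a) (XD a) (XZ a) ((sumn mu')%:Z + p%:Z)).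
      move=> nu hnu hnuz; apply: IHa => //; move: hN => /=; lia.
    apply: IHv => //; last by apply: Uz_vl.
    by move: hN => /=; lia.
  apply: UzD; apply: UzZ; last first.
    by apply: Uz_mono (Uz_vl hmu'); move: hN => /=; lia.
  have -> : (2%:Z - p%:Z) + (2%:Z - a%:Z) = 2%:Z - (p + a - 2)%N%:Z by lia.
  apply: (@Uz_mono ((sumn mu')%:Z + (p + a - 2)%N%:Z)); first by move: hN => /=; lia.
  apply: IHv; [lia | move: hN => /=; lia | exact: Uz_vl].
move=> p; move: {2}(N - p)%N (leqnn (N - p)%N) => k.
elim: k p => [|k IHk] p hk.
  apply: main => a hpa nu _ hnu; exfalso; lia.
apply: main => a hpa nu; apply: IHk; lia.
Qed.

Lemma X_Uz p z v : (0 < p)%N -> Uz z v -> Uz (z + p%:Z) (X p v).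
Proof.
move=> hp; apply: Uz_ext'; [exact: XD | exact: XZ |].
move=> la hla hz; apply: (@Uz_mono (sumn la + p)%N%:Z); first lia.
by apply: X_part.
Qed.

Lemma XB p u v : X p (u - v) = X p u - X p v.
Proof. exact: linearB. Qed.

Lemma rhoD n u v : rho n (u + v) = rho n u + rho n v.
Proof. by rewrite /rho LD scalerDr opprD addrACA. Qed.
Lemma rhoZ n (a : F) v : rho n (a *: v) = a *: rho n v.
Proof. by rewrite /rho LZ scalerBr !scalerA mulrC. Qed.

Lemma Lam_nz n : Lam n != 0 -> (2%:Z <= n) && (n <= 4%:Z).
Proof.
rewrite /Lam; case: ifP => [/eqP->|_] //; case: ifP => [/eqP->|_] //.
by case: ifP => [/eqP->|_] //; rewrite eqxx.
Qed.

Lemma Lam_out n : (n < 2%:Z) || (4%:Z < n) -> Lam n = 0.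
Proof.
move=> h; apply/eqP; apply: contraTT h => /Lam_nz /andP[h1 h2]; apply/negP; lia.
Qed.

Lemma rho_out n v : (n < 2%:Z) || (4%:Z < n) -> rho n v = L n v.
Proof. by move=> h; rewrite /rho Lam_out // scale0r subr0. Qed.

Lemma cen_nz m n : cen m n != 0 -> m + n = 0.
Proof. by rewrite /cen; case: ifP => [/eqP|_] //; rewrite eqxx. Qed.

Lemma UzZ_cen m n z z' v : (m + n = 0 -> z' <= z) -> Uz z' v -> Uz z (cen m n *: v).
Proof.
case: (eqVneq (cen m n) 0) => [->|/cen_nz h] H hv; first by rewrite scale0r; apply: Uz0.
by apply: UzZ; apply: Uz_mono (H h) hv.
Qed.

Lemma UzZ_Lam n z z' v : ((2%:Z <= n) && (n <= 4%:Z) -> z' <= z) -> Uz z' v ->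
  Uz z (Lam n *: v).
Proof.
case: (eqVneq (Lam n) 0) => [->|/Lam_nz h] H hv; first by rewrite scale0r; apply: Uz0.
by apply: UzZ; apply: Uz_mono (H h) hv.
Qed.

Lemma rho_J n : 2%:Z <= n -> rho n J = 0.
Proof.
move=> hn; rewrite /rho /Lam.
case: eqP => [->|h2]; first by rewrite hJ2 subrr.
case: eqP => [->|h3]; first by rewrite hJ3 subrr.
case: eqP => [->|h4]; first by rewrite hJ4 subrr.
rewrite hJn ?scale0r ?subrr //; lia.
Qed.

Lemma L_as_X k : k <= 1 -> exists2 q : nat, (0 < q)%N & k = 2%:Z - q%:Z.
Proof. move=> hk; exists `|2 - k|%N; lia. Qed.

Lemma rho_vl la : is_partition la -> forall k : int, 2%:Z <= k ->
  Uz ((sumn la)%:Z + 2%:Z - k) (rho k (vl la)).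
Proof.
elim: la => [|p la IH] hla k hk; first by rewrite vl_nil rho_J //; apply: Uz0.
have hp := part_pos hla; have hla' := part_cons hla.
rewrite vl_cons /rho /X comm -/(X p) /=.
set v := vl la.
have -> : X p (L k v) + ((k - (2%:Z - p%:Z))%:~R *: L (k + (2%:Z - p%:Z)) v +
     cen k (2%:Z - p%:Z) *: v) - Lam k *: X p v =
   X p (rho k v) + ((k - (2%:Z - p%:Z))%:~R *: L (k + (2%:Z - p%:Z)) v +
     cen k (2%:Z - p%:Z) *: v).
  by rewrite /rho XB XZ addrAC.
apply: UzD.
  have := X_Uz hp (IH hla' k hk); apply: Uz_mono; lia.
apply: UzD; last first.
  by apply: (UzZ_cen _ (Uz_vl hla')); lia.
apply: UzZ.
set k' := k + (2%:Z - p%:Z).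
have -> : L k' v = rho k' v + Lam k' *: v by rewrite /rho subrK.
apply: UzD; last first.
  by apply: (UzZ_Lam _ (Uz_vl hla')); rewrite /k'; lia.
case: (lerP 2%:Z k') => hk'.
  by have := IH hla' k' hk'; apply: Uz_mono; rewrite /k'; lia.
have [q hq hkq] : exists2 q : nat, (0 < q)%N & k' = 2%:Z - q%:Z by apply: L_as_X; lia.
rewrite hkq rho_out; last by lia.
have := X_Uz hq (Uz_vl hla'); apply: Uz_mono; rewrite /k' in hkq; lia.
Qed.

Lemma rho_Uz k z v : Uz z v -> Uz (z + 2%:Z - k) (rho k v).
Proof.
case: (lerP 2%:Z k) => hk.
  have -> : z + 2%:Z - k = z + (2%:Z - k) by lia.
  apply: Uz_ext'; [exact: rhoD | exact: rhoZ|] => la hla hz.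
  by have := rho_vl hla hk; apply: Uz_mono; lia.
have [q hq hkq] : exists2 q : nat, (0 < q)%N & k = 2%:Z - q%:Z by apply: L_as_X; lia.
move=> hv; rewrite rho_out; last by lia.
rewrite hkq -/(X q); have := X_Uz hq hv; apply: Uz_mono; lia.
Qed.

Lemma L_split k u : L k u = rho k u + Lam k *: u.
Proof. by rewrite /rho subrK. Qed.

Lemma rho_X k p v : rho k (X p v) =
  X p (rho k v) + ((k - (2%:Z - p%:Z))%:~R *: L (k + (2%:Z - p%:Z)) v +
     cen k (2%:Z - p%:Z) *: v).
Proof. by rewrite /rho /X comm -/(X p) XB XZ addrAC. Qed.

Definition E (N : nat) (v : V) : V := \sum_(j <- iota 1 N) X j (rho (j%:Z + 2%:Z) v).

Lemma ED N u v : E N (u + v) = E N u + E N v.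
Proof. by rewrite /E -big_split; apply: eq_bigr => j _; rewrite rhoD XD. Qed.
Lemma EZ N (a : F) v : E N (a *: v) = a *: E N v.
Proof. by rewrite /E scaler_sumr; apply: eq_bigr => j _; rewrite rhoZ XZ. Qed.

Lemma X0 p : X p 0 = 0.
Proof. exact: linear0. Qed.
Lemma rho0 k : rho k 0 = 0.
Proof. by rewrite /rho linear0 scaler0 subr0. Qed.

Lemma X_sum p (I : Type) (s : seq I) (f : I -> V) :
  X p (\sum_(i <- s) f i) = \sum_(i <- s) X p (f i).
Proof. exact: linear_sum. Qed.

Lemma Euler la : is_partition la -> forall N, (sumn la <= N)%N ->
  Uz ((sumn la)%:Z - 1) (E N (vl la) - (2%:R * La4 * (sumn la)%:R) *: vl la).
Proof.
elim: la => [|p la IH] hla N hN.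
  rewrite /= mulr0 scale0r subr0 /E big1_seq; first exact: Uz0.
  by move=> j /andP[_]; rewrite mem_iota => /andP[hj _]; rewrite rho_J ?X0 //; lia.
have hp := part_pos hla; have hla' := part_cons hla.
set v := vl la; set m := sumn la.
have hm : (m + p <= N)%N by move: hN => /=; rewrite addnC.
pose T j := ((2%:Z - j%:Z) - (2%:Z - p%:Z))%:~R *:
     L ((2%:Z - j%:Z) + (2%:Z - p%:Z)) (rho (j%:Z + 2%:Z) v) +
   cen (2%:Z - j%:Z) (2%:Z - p%:Z) *: rho (j%:Z + 2%:Z) v +
   X j ((j%:Z + 2%:Z - (2%:Z - p%:Z))%:~R *: L (j%:Z + 2%:Z + (2%:Z - p%:Z)) v +
     cen (j%:Z + 2%:Z) (2%:Z - p%:Z) *: v).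
have hE : E N (vl (p :: la)) = X p (E N v) + \sum_(j <- iota 1 N) T j.
  rewrite /E X_sum -big_split; apply: eq_bigr => j _.
  rewrite vl_cons -/v rho_X XD /X comm -!/(X _) /T /=.
  by rewrite -!addrA.
have hT : forall j, (0 < j)%N -> Uz (m%:Z + p%:Z - 1)
    (T j - (if j == p then (2%:R * La4 * p%:R) *: X p v else 0)).
  move=> j hj; have hv := Uz_vl hla'; rewrite -/v -/m in hv.
  have hrj : Uz (m%:Z - j%:Z) (rho (j%:Z + 2%:Z) v).
    by have := rho_Uz (j%:Z + 2%:Z) hv; apply: Uz_mono; lia.
  rewrite /T -[X in Uz _ X]addrA; apply: UzD.
    apply: UzD; last by apply: (UzZ_cen _ hrj); lia.
    apply: UzZ; rewrite L_split; apply: UzD.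
      by have := rho_Uz ((2%:Z - j%:Z) + (2%:Z - p%:Z)) hrj; apply: Uz_mono; lia.
    by apply: UzZ; apply: Uz_mono hrj; lia.
  rewrite (XD j) (XZ j _ (L _ _)) (L_split (j%:Z + 2%:Z + (2%:Z - p%:Z))) (XD j) (XZ j _ v).
  rewrite scalerDr -[X in Uz _ X]addrA -[X in Uz _ X]addrA; apply: UzD.
    apply: UzZ.
    have := X_Uz hj (rho_Uz (j%:Z + 2%:Z + (2%:Z - p%:Z)) hv); apply: Uz_mono; lia.
  rewrite addrCA; apply: UzD.
    by apply: (UzZ_cen _ (X_Uz hj hv)); lia.
  case: (eqVneq j p) => [ejp|njp] /=.
    rewrite ejp.
    have -> : Lam (p%:Z + 2%:Z + (2%:Z - p%:Z)) = La4.
      by rewrite /Lam; have -> : p%:Z + 2%:Z + (2%:Z - p%:Z) = 4%:Z by lia.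
    have -> : ((p%:Z + 2%:Z - (2%:Z - p%:Z))%:~R : F) = 2%:R * p%:R.
      have -> : p%:Z + 2%:Z - (2%:Z - p%:Z) = (2 * p)%N%:Z by lia.
      by rewrite -natrM.
    rewrite (XZ p) scalerA ?eqxx.
    have -> : 2%:R * p%:R * La4 = (2%:R * La4 * p%:R : F) by ring.
    rewrite subrr; exact: Uz0.
  rewrite subr0 (XZ j); apply: UzZ; apply: UzZ_Lam (X_Uz hj hv).
  move/eqP: njp => njp; lia.
rewrite hE.
have hsum : \sum_(j <- iota 1 N) (if j == p then (2%:R * La4 * p%:R) *: X p v else 0)
    = (2%:R * La4 * p%:R) *: X p v.
  have hpin : p \in iota 1 N by rewrite mem_iota; lia.
  rewrite (bigD1_seq p hpin (iota_uniq _ _)) /= eqxx big1 ?addr0 // => j /negbTE ->; done.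
have -> : X p (E N v) + \sum_(j <- iota 1 N) T j -
    (2%:R * La4 * (sumn (p :: la))%:R) *: vl (p :: la) =
    X p (E N v - (2%:R * La4 * m%:R) *: v) +
    (\sum_(j <- iota 1 N) (T j - (if j == p then (2%:R * La4 * p%:R) *: X p v else 0))).
  rewrite sumrB hsum XB XZ vl_cons -/v /= natrD.
  by rewrite !mulrDr scalerDl -/m opprD (addrC (- _)) addrACA.
apply: UzD.
  have := X_Uz hp (IH hla' N (leq_trans (leq_addr _ _) hm)); apply: Uz_mono.
  rewrite /= -/m; lia.
apply: Uz_sum_seq => j; rewrite mem_iota => /andP[hj _].
by have := hT j hj; apply: Uz_mono; rewrite /= -/m; lia.
Qed.

Lemma Euler_Uz N (z : int) v : z <= N%:Z -> Uz z v ->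
  Uz (z - 1) (E N v - (2%:R * La4 * z%:~R) *: v).
Proof.
move=> hzN; apply: (@Uz_ext' (fun u => E N u - (2%:R * La4 * z%:~R) *: u)).
- by move=> u w; rewrite ED scalerDr opprD addrACA.
- by move=> a u; rewrite EZ scalerBr !scalerA mulrC.
move=> la hla hz.
have hN : (sumn la <= N)%N by lia.
have := Euler hla hN => h.
have -> : E N (vl la) - (2%:R * La4 * z%:~R) *: vl la =
   (E N (vl la) - (2%:R * La4 * (sumn la)%:R) *: vl la) +
   (2%:R * La4 * (sumn la)%:R - 2%:R * La4 * z%:~R) *: vl la.
  by rewrite scalerBl addrA subrK.
apply: UzD; first by apply: Uz_mono h; lia.
case: (eqVneq (sumn la)%:Z z) => [<-|hne].
  by rewrite subrr scale0r; apply: Uz0.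
by apply: UzZ; apply: Uz_mono (Uz_vl hla); move/eqP: hne; lia.
Qed.

Lemma E_whitt N v : (forall n : nat, (3 <= n)%N -> rho n%:Z v = 0) -> E N v = 0.
Proof.
move=> h; rewrite /E big1_seq // => j /andP[_]; rewrite mem_iota => /andP[hj _].
by have := h (j + 2)%N; rewrite PoszD => ->; rewrite ?X0 //; lia.
Qed.

Lemma nat_nz (n : nat) : (n.+1%:R : F) != 0.
Proof. by rewrite pnatr_eq0. Qed.

Lemma whitt_unique (m : nat) v : Uz m%:Z v ->
  (forall n : nat, (3 <= n)%N -> rho n%:Z v = 0) -> Uz 0 v.
Proof.
move=> hv hw; elim: m v hv hw => [|m IH] v hv hw //.
suff hm : Uz m%:Z v by exact: IH hm hw.
have := Euler_Uz (lexx _) hv; rewrite E_whitt // sub0r => h.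
have hk : (2%:R * La4 * (m.+1)%:Z%:~R : F) != 0.
  by rewrite !mulf_neq0 // ?(nat_nz 1) // -[_%:~R]/(m.+1%:R) nat_nz.
have := UzN (UzZ ((2%:R * La4 * (m.+1)%:Z%:~R)^-1) h).
rewrite scalerN opprK scalerA mulVf // scale1r.
by apply: Uz_mono; lia.
Qed.

Lemma Uz0_J v : Uz 0 v -> exists a, v = a *: J.
Proof.
move=> [s [hs ->]]; exists (\sum_(p <- s) p.2).
rewrite scaler_suml; apply: eq_big_seq => p hp.
move/allP: hs => /(_ p hp) /andP[hpar hz].
suff -> : p.1 = [::] by [].
move: hpar hz; case: p.1 => // a la /part_pos ha /=; lia.
Qed.

Definition Sne (v : V) : Prop := in_span (fun n => L n) J (fun la => la != [::]) v.

Lemma span_B (P : pred (seq nat)) u v : in_span (fun n => L n) J P u ->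
  in_span (fun n => L n) J P v -> in_span (fun n => L n) J P (u - v).
Proof.
move=> [s [hs ->]] [t [ht ->]]; exists (s ++ [seq (p.1, - p.2) | p <- t]); split.
  by rewrite all_cat hs /= all_map; apply: sub_all ht => p.
by rewrite big_cat big_map /= -sumrN; congr (_ + _); apply: eq_bigr => p _; rewrite scaleNr.
Qed.

Lemma span_sub (P Q : pred (seq nat)) v : (forall la, P la -> Q la) ->
  in_span (fun n => L n) J P v -> in_span (fun n => L n) J Q v.
Proof.
move=> hPQ [s [hs ->]]; exists s; split => //.
by apply: sub_all hs => p /andP[-> /hPQ ->].
Qed.

Lemma coef0 (s : seq (seq nat * F)) : all (fun p => is_partition p.1) s ->
  \sum_(p <- s) p.2 *: vl p.1 = 0 ->
  forall la, \sum_(p <- s | p.1 == la) p.2 = 0.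
Proof.
move=> hs h0 la.
set S := undup [seq p.1 | p <- s].
pose a la := \sum_(p <- s | p.1 == la) p.2.
have hS : all is_partition S.
  by apply/allP => x; rewrite mem_undup => /mapP[p hp ->]; move/allP: hs => /(_ p hp).
have heq : \sum_(x <- S) a x *: vl x = \sum_(p <- s) p.2 *: vl p.1.
  transitivity (\sum_(x <- S) \sum_(p <- s) (if p.1 == x then p.2 *: vl p.1 else 0)).
    apply: eq_bigr => x _; rewrite /a scaler_suml big_mkcond /=.
    by apply: eq_bigr => p _; case: eqP => // ->.
  rewrite exchange_big /=; apply: eq_big_seq => p hp.
  have hpS : p.1 \in S by rewrite mem_undup; apply: map_f.
  rewrite (bigD1_seq p.1 hpS (undup_uniq _)) /= eqxx big1 ?addr0 //.
  by move=> x; rewrite eq_sym => /negbTE ->.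
case: (boolP (la \in S)) => hla.
  exact: pbw.2 S a (undup_uniq _) hS (etrans heq h0) la hla.
rewrite big1_seq // => p /andP[/eqP hp hps]; exfalso; move/negP: hla; apply.
by rewrite mem_undup -hp; apply/mapP; exists p.
Qed.

Lemma Sne_J a : Sne (a *: J) -> a = 0.
Proof.
move=> [s [hs hsum]].
have h0 : \sum_(p <- ([::], - a) :: s) p.2 *: vl p.1 = 0.
  by rewrite big_cons /= -hsum scaleNr addNr.
have hall : all (fun p => is_partition p.1) (([::], - a) :: s).
  by rewrite /= /is_partition /=; apply: sub_all hs => p /andP[].
have := coef0 hall h0 [::]; rewrite big_cons /= big1_seq ?addr0.
  by move/eqP; rewrite oppr_eq0 => /eqP.
move=> p /andP[hp hps]; exfalso.
by move/allP: hs => /(_ p hps) /andP[_]; rewrite hp.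
Qed.

Lemma split_J z v : Uz z v -> exists a, Sne (v - a *: J) /\ Uz z (v - a *: J).
Proof.
move=> [s [hs ->]]; exists (\sum_(p <- s | p.1 == [::]) p.2).
have -> : \sum_(p <- s) p.2 *: vl p.1 - (\sum_(p <- s | p.1 == [::]) p.2) *: J =
    \sum_(p <- [seq p <- s | p.1 != [::]]) p.2 *: vl p.1.
  have hA : \sum_(p <- s | p.1 == [::]) p.2 *: vl p.1 =
      (\sum_(p <- s | p.1 == [::]) p.2) *: J.
    by rewrite scaler_suml; apply: eq_bigr => p /eqP ->.
  by rewrite big_filter (bigID (fun p => p.1 == [::])) /= hA addrC addrK.
split; exists [seq p <- s | p.1 != [::]]; split => //; rewrite all_filter;
  apply: sub_all hs => p /andP[h1 h2]; apply/implyP => h3; by rewrite h1 ?h2 ?h3.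
Qed.

Lemma all_in_U v : exists m : nat, Uz m%:Z v.
Proof.
have [s [hs ->]] := pbw.1 v.
elim: s hs => [|p s IH] /=; first by exists 0%N; rewrite big_nil; apply: Uz0.
move=> /andP[hp hs]; have [m hm] := IH hs.
exists (maxn m (sumn p.1)); rewrite big_cons; apply: UzD.
  by apply: UzZ; apply: Uz_mono (Uz_vl hp); rewrite lez_nat leq_maxr.
by apply: Uz_mono hm; rewrite lez_nat leq_maxl.
Qed.

Lemma rhoB n u v : rho n (u - v) = rho n u - rho n v.
Proof. by rewrite -scaleN1r rhoD rhoZ scaleN1r. Qed.

Lemma sub4 (a b e g : V) : (a - b) - (e - g) = (a - e) - (b - g).
Proof. by rewrite !opprB addrACA [RHS]addrACA (addrC (- b)). Qed.

Lemma rho_comm (n m : nat) v : (3 <= n)%N -> (3 <= m)%N ->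
  rho n%:Z (rho m%:Z v) - rho m%:Z (rho n%:Z v) =
  (n%:Z - m%:Z)%:~R *: rho (n + m)%N%:Z v.
Proof.
move=> hn hm.
have e1 : rho n%:Z (rho m%:Z v) =
    L n%:Z (L m%:Z v) - (Lam n%:Z *: L m%:Z v + Lam m%:Z *: rho n%:Z v).
  by rewrite [rho m%:Z v]/rho rhoB rhoZ [rho n%:Z (L _ _)]/rho opprD addrA.
have e2 : rho m%:Z (rho n%:Z v) =
    L m%:Z (L n%:Z v) - (Lam n%:Z *: L m%:Z v + Lam m%:Z *: rho n%:Z v).
  rewrite [rho n%:Z v]/rho rhoB rhoZ [rho m%:Z (L _ _)]/rho /rho -addrA -opprD.
  congr (_ - _).
  by rewrite !scalerBr !scalerA (mulrC (Lam n%:Z)) addrCA.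
rewrite e1 e2 opprB addrA subrK vir.
rewrite rho_out; last by apply/orP; right; lia.
rewrite /cen; have -> : (n%:Z + m%:Z == 0) = false by apply/eqP; lia.
by rewrite scale0r addr0 PoszD.
Qed.

Definition cocyc (f : nat -> V) := forall n m : nat, (3 <= n)%N -> (3 <= m)%N ->
  rho n%:Z (f m) - rho m%:Z (f n) = (n%:Z - m%:Z)%:~R *: f (n + m)%N.

Lemma rho_sum k (I : Type) (s : seq I) (f : I -> V) :
  rho k (\sum_(i <- s) f i) = \sum_(i <- s) rho k (f i).
Proof.
elim: s => [|i s IH]; first by rewrite !big_nil rho0.
by rewrite !big_cons rhoD IH.
Qed.

Lemma FS (d : nat) : forall f : nat -> V,
  (forall n, (3 <= n)%N -> Uz (d%:Z + 2%:Z - n%:Z) (f n)) -> cocyc f ->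
  exists Xv, Uz d%:Z Xv /\ forall n, (3 <= n)%N -> rho n%:Z Xv = f n.
Proof.
elim: d => [|d IH] f hf hc.
  exists 0; split; first exact: Uz0.
  move=> n hn; rewrite rho0; symmetry; apply: Uz_neg (hf n hn); lia.
set D := d.+1.
set k : F := 2%:R * La4 * D%:R.
have hk : k != 0 by rewrite /k !mulf_neq0 // ?(nat_nz 1) // nat_nz.
pose Y := k^-1 *: \sum_(j <- iota 1 D) X j (f (j + 2)%N).
have hg : forall j, (0 < j)%N -> Uz (D%:Z - j%:Z) (f (j + 2)%N).
  by move=> j hj; have := hf (j + 2)%N (leq_add (hj : (1 <= j)%N) (leqnn 2)); apply: Uz_mono; lia.
have hY : Uz D%:Z Y.
  apply: UzZ; apply: Uz_sum_seq => j; rewrite mem_iota => /andP[hj1 hj2].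
  by have := X_Uz hj1 (hg j hj1); apply: Uz_mono; lia.
have hb : forall n, (3 <= n)%N -> Uz (D%:Z + 1 - n%:Z) (rho n%:Z Y - f n).
  move=> n hn.
  pose S j := X j ((n%:Z - (j + 2)%N%:Z)%:~R *: f (n + (j + 2))%N) +
    ((n%:Z - (2%:Z - j%:Z))%:~R *: L (n%:Z + (2%:Z - j%:Z)) (f (j + 2)%N) +
     cen n%:Z (2%:Z - j%:Z) *: f (j + 2)%N).
  pose ite j := if j == (n - 2)%N then (2%:R * La4 * (n - 2)%N%:R) *: f n else 0.
  have hsum : \sum_(j <- iota 1 D) rho n%:Z (X j (f (j + 2)%N)) =
      E D (f n) + \sum_(j <- iota 1 D) S j.
    rewrite /E -big_split; apply: eq_big_seq => j; rewrite mem_iota => /andP[hj1 _].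
    have hj3 : (3 <= j + 2)%N by rewrite (leq_add2r 2 1 j).
    have := hc n (j + 2)%N hn hj3 => hcj.
    have e : rho n%:Z (f (j + 2)%N) = rho (j + 2)%N%:Z (f n) +
        (n%:Z - (j + 2)%N%:Z)%:~R *: f (n + (j + 2))%N by rewrite -hcj addrC subrK.
    by rewrite rho_X e XD /S -PoszD /= [RHS]addrA.
  have hite : \sum_(j <- iota 1 D) ite j = (2%:R * La4 * (n - 2)%N%:R) *: f n.
    case: (leqP (n - 2)%N D) => hnD.
      have hin : (n - 2)%N \in iota 1 D by rewrite mem_iota; lia.
      rewrite (bigD1_seq _ hin (iota_uniq _ _)) /= /ite eqxx big1 ?addr0 //.
      by move=> j /negbTE ->.
    have fn0 : f n = 0 by apply: Uz_neg (hf n hn); lia.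
    by rewrite fn0 scaler0 big1 // => j _; rewrite /ite fn0 scaler0; case: ifP.
  have hS : forall j, j \in iota 1 D -> Uz (D%:Z + 1 - n%:Z) (S j - ite j).
    move=> j; rewrite mem_iota => /andP[hj1 hj2].
    rewrite /S -[X in Uz _ X]addrA; apply: UzD.
      rewrite XZ; apply: UzZ.
      have := X_Uz hj1 (hf (n + (j + 2))%N (leq_trans hn (leq_addr _ _))).
      by apply: Uz_mono; lia.
    rewrite L_split scalerDr -[X in Uz _ X]addrA -[X in Uz _ X]addrA; apply: UzD.
      by apply: UzZ; have := rho_Uz (n%:Z + (2%:Z - j%:Z)) (hg j hj1); apply: Uz_mono; lia.
    rewrite [X in Uz _ X]addrCA; apply: UzD.
      by apply: (UzZ_cen _ (hg j hj1)); lia.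
    rewrite /ite; case: (eqVneq j (n - 2)%N) => [ejn|njn] /=.
      have e4 : n%:Z + (2%:Z - j%:Z) = 4%:Z by rewrite ejn; lia.
      have e5 : n%:Z - (2%:Z - j%:Z) = (2 * (n - 2))%N%:Z by rewrite ejn; lia.
      have e6 : (j + 2)%N = n by rewrite ejn subnK //; lia.
      rewrite e4 e5 e6 /Lam /= scalerA.
      have h2 : ((2 * (n - 2))%N%:Z%:~R : F) = 2%:R * (n - 2)%:R by rewrite -natrM.
      rewrite h2.
      have -> : (2%:R * (n - 2)%:R * La4 : F) = 2%:R * La4 * (n - 2)%:R by ring.
      by rewrite subrr; apply: Uz0.
    rewrite subr0; apply: UzZ; apply: UzZ_Lam (hg j hj1).
    move/eqP: njn => njn; lia.
  have hkk : (2%:R * La4 * (D%:Z + 2%:Z - n%:Z)%:~R) + 2%:R * La4 * (n - 2)%N%:R = k.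
    rewrite -mulrDr /k; congr (_ * _).
    have -> : ((n - 2)%N%:R : F) = ((n - 2)%N%:Z)%:~R by [].
    rewrite -intrD; have -> : D%:Z + 2%:Z - n%:Z + (n - 2)%N%:Z = D%:Z by lia.
    by [].
  have -> : rho n%:Z Y - f n = k^-1 *: ((E D (f n) -
      (2%:R * La4 * (D%:Z + 2%:Z - n%:Z)%:~R) *: f n) +
      \sum_(j <- iota 1 D) (S j - ite j)).
    rewrite /Y rhoZ rho_sum hsum sumrB hite.
    have e : forall A, k^-1 *: A - f n = k^-1 *: (A - k *: f n).
      by move=> A; rewrite scalerBr scalerA mulVf // scale1r.
    rewrite e; congr (_ *: _).
    rewrite -hkk scalerDl; set a := E D (f n); set b := \sum_(i <- iota 1 D) S i.
    set u := (2%:R * La4 * (D%:Z + 2%:Z - n%:Z)%:~R) *: f n.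
    set w := (2%:R * La4 * (n - 2)%N%:R) *: f n.
    by rewrite opprD addrACA.
  apply: UzZ; apply: UzD; last exact: Uz_sum_seq.
  have hle : D%:Z + 2%:Z - n%:Z <= D%:Z by lia.
  by have := Euler_Uz hle (hf n hn); apply: Uz_mono; lia.
pose f' n := f n - rho n%:Z Y.
have [X' [hX'1 hX'2]] : exists Xv, Uz d%:Z Xv /\ forall n, (3 <= n)%N -> rho n%:Z Xv = f' n.
  apply: IH.
    move=> n hn; rewrite /f' -[X in Uz _ X]opprB; apply: UzN.
    by have := hb n hn; apply: Uz_mono; lia.
  move=> n m hn hm; rewrite /f' (rhoB n%:Z (f m) (rho m%:Z Y)) (rhoB m%:Z (f n) (rho n%:Z Y)).
  by rewrite scalerBr -hc // -rho_comm // sub4.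
exists (Y + X'); split.
  by apply: UzD => //; apply: Uz_mono hX'1; lia.
by move=> n hn; rewrite rhoD hX'2 // /f' addrC subrK.
Qed.

Definition Good (k : nat) (a b : V) : Prop :=
  Uz (3 * k)%N%:Z b /\
  (forall n : nat, (3 <= n)%N -> rho n%:Z b = if n == 5%N then a else 0).

Lemma step k a b : Good k a b -> exists b', Good k.+1 b b' /\ Sne b'.
Proof.
move=> [hb hr].
pose f n := if n == 5%N then b else 0.
have hf1 : forall n, (3 <= n)%N -> Uz ((3 * k.+1)%N%:Z + 2%:Z - n%:Z) (f n).
  move=> n hn; rewrite /f; case: eqP => [->|_]; last exact: Uz0.
  by apply: Uz_mono hb; lia.
have hc1 : cocyc f.
  move=> n m hn hm; rewrite /f.
  have -> : (n + m == 5)%N = false by apply/eqP; lia.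
  rewrite scaler0.
  case: (eqVneq m 5%N) => [em|nm]; case: (eqVneq n 5%N) => [en|nn] /=.
  - by rewrite em en subrr.
  - by rewrite hr // (negbTE nn) rho0 subrr.
  - by rewrite hr // (negbTE nm) rho0 subrr.
  - by rewrite !rho0 subrr.
have [Xv [hX1 hX2]] := FS hf1 hc1.
have [a' [hs hu]] := split_J hX1.
exists (Xv - a' *: J); split => //; split; first by apply: Uz_mono hu; lia.
move=> n hn; rewrite rhoB rhoZ rho_J; last by lia.
by rewrite scaler0 subr0 hX2.
Qed.

Lemma step_ex k a b : exists b', Good k a b -> Good k.+1 b b' /\ Sne b'.
Proof.
case: (classic (Good k a b)) => h.
  by have [b' hb'] := step h; exists b'.
by exists 0.
Qed.

Definition nxt k a b : V := proj1_sig (constructive_indefinite_description _ (step_ex k a b)).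

Lemma nxtP k a b : Good k a b -> Good k.+1 b (nxt k a b) /\ Sne (nxt k a b).
Proof. rewrite /nxt; case: constructive_indefinite_description => x hx /=; exact: hx. Qed.

Fixpoint pr (k : nat) : V * V :=
  if k is k'.+1 then ((pr k').2, nxt k' (pr k').1 (pr k').2) else (0, J).

Definition Psi k := (pr k).2.

Lemma prP k : Good k (pr k).1 (pr k).2 /\ (k != 0%N -> Sne (pr k).2).
Proof.
elim: k => [|k [IH1 IH2]].
  split=> //; split; first exact: (@Uz_vl [::]).
  by move=> n hn; rewrite /= rho_J; [case: ifP | lia].
by have [h1 h2] := nxtP IH1; split.
Qed.


Lemma solves_rho (P : nat -> V) : solves (fun n => L n) J La3 La4 P ->
  forall k (n : nat), (3 <= n)%N ->
  rho n%:Z (P k) = if n == 5%N then (if k is k'.+1 then P k' else 0) else 0.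
Proof.
move=> [h0 [h3 [h4 [h5 h6]]]] k n hn.
case: (eqVneq n 5%N) => [->|n5] /=.
  rewrite rho_out; last by apply/orP; right; lia.
  exact: h5.
case: (eqVneq n 3%N) => [->|n3].
  by rewrite /rho h3 /Lam /= subrr.
case: (eqVneq n 4%N) => [->|n4].
  by rewrite /rho h4 /Lam /= subrr.
move/eqP: n5 => n5; move/eqP: n3 => n3; move/eqP: n4 => n4.
rewrite rho_out; last by apply/orP; right; lia.
apply: h6; lia.
Qed.

Lemma Psi_solves : solves (fun n => L n) J La3 La4 Psi.
Proof.
have hr k n (hn : (3 <= n)%N) : rho n%:Z (Psi k) = if n == 5%N then (pr k).1 else 0.
  exact: (prP k).1.2.
split; first by [].
split; first by move=> k; have := hr k 3%N isT; rewrite /rho /Lam /= => /eqP; rewrite subr_eq0 => /eqP.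
split; first by move=> k; have := hr k 4%N isT; rewrite /rho /Lam /= => /eqP; rewrite subr_eq0 => /eqP.
split.
  move=> k; have := hr k 5%N isT; rewrite rho_out /=; last done.
  by move=> ->; case: k.
move=> [n|n] k hn; last by exfalso; move: hn; rewrite /=; lia.
have := hr k n; rewrite rho_out; last by apply/orP; right; lia.
have -> : (n == 5%N) = false by apply/eqP; lia.
by apply; lia.
Qed.

Lemma Psi_U k : in_U (fun n => L n) J (3 * k) (Psi k).
Proof.
have := (prP k).1.1; apply: span_sub => la /=; by rewrite lez_nat.
Qed.

Lemma Psi_xi k : xi_is (fun n => L n) J (Psi k) (if k == 0%N then 1 else 0).
Proof.
rewrite /xi_is; case: k => [|k] /=.
  by rewrite /Psi /= scale1r subrr; exists [::]; rewrite big_nil.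
rewrite scale0r subr0; exact: (prP k.+1).2.
Qed.

Lemma Psi_uniq (P : nat -> V) : solves (fun n => L n) J La3 La4 P ->
  (forall k, xi_is (fun n => L n) J (P k) (if k == 0%N then 1 else 0)) ->
  forall k, P k = Psi k.
Proof.
move=> hP hxi; elim=> [|k IH]; first by case: hP => ->.
set D := P k.+1 - Psi k.+1.
have hD : forall n : nat, (3 <= n)%N -> rho n%:Z D = 0.
  move=> n hn; rewrite /D rhoB (solves_rho hP) // (solves_rho Psi_solves) // IH.
  by rewrite subrr.
have [m hm] := all_in_U D.
have [a ha] := Uz0_J (whitt_unique hm hD).
have hS : Sne D.
  have h1 := hxi k.+1; have h2 := Psi_xi k.+1.
  rewrite /xi_is /= scale0r subr0 in h1 h2.
  by rewrite /Sne /D; rewrite ?subr0 in h2; apply: span_B.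
rewrite ha in hS; have a0 := Sne_J hS.
by apply/eqP; rewrite -subr_eq0 -/D ha a0 scale0r.
Qed.

Lemma mainA :
  (exists Psi : nat -> V, solves (fun n => L n) J La3 La4 Psi) /\
  (exists Psi : nat -> V, solves (fun n => L n) J La3 La4 Psi /\
     forall k, in_U (fun n => L n) J (3 * k) (Psi k)) /\
  (exists Psi : nat -> V,
     solves (fun n => L n) J La3 La4 Psi /\
     (forall k, xi_is (fun n => L n) J (Psi k) (if k == 0%N then 1 else 0)) /\
     (forall k, in_U (fun n => L n) J (3 * k) (Psi k)) /\
     (forall Psi' : nat -> V,
        solves (fun n => L n) J La3 La4 Psi' ->
        (forall k, xi_is (fun n => L n) J (Psi' k) (if k == 0%N then 1 else 0)) ->
        forall k, Psi' k = Psi k)).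
Proof.
split; first by exists Psi; exact: Psi_solves.
split; first by exists Psi; split; [exact: Psi_solves | exact: Psi_U].
exists Psi; split; first exact: Psi_solves.
split; first exact: Psi_xi.
split; first exact: Psi_U.
exact: Psi_uniq.
Qed.

End Main.

Theorem theoremA1 (R : realType) (V : lmodType R[i]) (c : R[i])
    (L : int -> {linear V -> V}) (J : V) (La2 La3 La4 : R[i]) :
  La4 != 0 ->
  virasoro_rel c (fun n => L n) ->
  L 2%:Z J = La2 *: J -> L 3%:Z J = La3 *: J -> L 4%:Z J = La4 *: J ->
  (forall n : int, 4%:Z < n -> L n J = 0) ->
  pbw_basis (fun n => L n) J ->
  (* (1) existence *)
  (exists Psi : nat -> V, solves (fun n => L n) J La3 La4 Psi) /\
  (* (2) existence with Psi_k in U_{3k} *)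
  (exists Psi : nat -> V, solves (fun n => L n) J La3 La4 Psi /\
     forall k, in_U (fun n => L n) J (3 * k) (Psi k)) /\
  (* (3) uniqueness under the gauge xi(Psi_k) = delta_{k,0}; the solution lies in U_{3k} *)
  (exists Psi : nat -> V,
     solves (fun n => L n) J La3 La4 Psi /\
     (forall k, xi_is (fun n => L n) J (Psi k) (if k == 0%N then 1 else 0)) /\
     (forall k, in_U (fun n => L n) J (3 * k) (Psi k)) /\
     (forall Psi' : nat -> V,
        solves (fun n => L n) J La3 La4 Psi' ->
        (forall k, xi_is (fun n => L n) J (Psi' k) (if k == 0%N then 1 else 0)) ->
        forall k, Psi' k = Psi k)).
Proof.
move=> h4 hv h2 h3 h4' hn hp.
exact: (@mainA R V c L J La2 La3 La4 h4 hv h2 h3 h4' hn hp).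
Qed.
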